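(* Let $X,Y$ be positive words and suppose $Xa_{ts}\doteq Ya_{rq}$ (with $n\ge t>s\ge1$, $n\ge r>q\ge1$). Then: (I) If $t=r$ and $s=q$, then $X\doteq Y$. (II) (i) If $t=r$ and $q<s$, then $X\doteq Za_{tq}$, $Y\doteq Za_{sq}$ for some positive word $Z$; (ii) if $t=r$ and $s<q$, then $X\doteq Za_{qs}$, $Y\doteq Za_{ts}$; (iii) if $t=q$, then $X\doteq Za_{rt}$, $Y\doteq Za_{ts}$; (iv) if $s=r$, then $X\doteq Za_{tq}$, $Y\doteq Za_{ts}$; (v) if $s=q$ and $r<t$, then $X\doteq Za_{rs}$, $Y\doteq Za_{tr}$; (vi) if $s=q$ and $t<r$, then $X\doteq Za_{rt}$, $Y\doteq Za_{ts}$; in each case for some positive word $Z$. (III) If $(t-r)(t-q)(s-r)(s-q)>0$, then $X\doteq Za_{rq}$ and $Y\doteq Za_{ts}$ for some positive word $Z$. (IV) (i) If $q<s<r<t$, then $X\doteq Za_{tq}a_{rs}$ and $Y\doteq Za_{tr}a_{sq}$ for some positive word $Z$; (ii) if $s<q<t<r$, then $X\doteq Za_{rt}a_{qs}$ and $Y\doteq Za_{tq}a_{rs}$ for some positive word $Z$.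
   Context: $B_n$ is the $n$-string braid group with band generators $a_{ts}$ ($n\ge t>s\ge1$), where $a_{ts}=(\sigma_{t-1}\cdots\sigma_{s+1})\sigma_s(\sigma_{s+1}^{-1}\cdots\sigma_{t-1}^{-1})$. The band relations are: (R1) $a_{ts}a_{rq}=a_{rq}a_{ts}$ if $(t-r)(t-q)(s-r)(s-q)>0$; (R2) $a_{ts}a_{sr}=a_{tr}a_{ts}=a_{sr}a_{tr}$ for $n\ge t>s>r\ge1$. A positive word is a word in positive powers of the $a_{ts}$. Two positive words $X,Y$ are positively equivalent, $X\doteq Y$, if one can be transformed into the other by a finite sequence of single direct applications of relations (R1), (R2) to subwords. *)

(* Defs.v *)
From mathcomp Require Import all_boot all_order all_algebra.
Set Implicit Arguments. Unset Strict Implicit. Unset Printing Implicit Defensive.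
Import Order.TTheory GRing.Theory Num.Theory.

Definition gen := (nat * nat)%type.
Definition a (t s : nat) : gen := (t, s).

Definition valid_gen (n : nat) (g : gen) : bool := (0 < g.2) && (g.2 < g.1) && (g.1 <= n).

Definition pword (n : nat) (w : seq gen) : bool := all (valid_gen n) w.

Definition commute_cond (t s r q : nat) : bool :=
  (0 < ((t%:Z - r%:Z) * (t%:Z - q%:Z) * (s%:Z - r%:Z) * (s%:Z - q%:Z)))%R.

Inductive band_rel (n : nat) : seq gen -> seq gen -> Prop :=
| R1 t s r q : valid_gen n (a t s) -> valid_gen n (a r q) -> commute_cond t s r q ->
    band_rel n [:: a t s; a r q] [:: a r q; a t s]
| R2a t s r : t <= n -> s < t -> r < s -> 1 <= r ->
    band_rel n [:: a t s; a s r] [:: a t r; a t s]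
| R2b t s r : t <= n -> s < t -> r < s -> 1 <= r ->
    band_rel n [:: a t r; a t s] [:: a s r; a t r]
| R2c t s r : t <= n -> s < t -> r < s -> 1 <= r ->
    band_rel n [:: a t s; a s r] [:: a s r; a t r].

Inductive pstep (n : nat) : seq gen -> seq gen -> Prop :=
| pstep_fwd u v l r : band_rel n l r -> pstep n (u ++ l ++ v) (u ++ r ++ v)
| pstep_bwd u v l r : band_rel n l r -> pstep n (u ++ r ++ v) (u ++ l ++ v).

Inductive peq (n : nat) : seq gen -> seq gen -> Prop :=
| peq_refl w : peq n w w
| peq_step w1 w2 w3 : pstep n w1 w2 -> peq n w2 w3 -> peq n w1 w3.

Definition common_prefix (n : nat) (X Y A B : seq gen) : Prop :=
  exists Z : seq gen, pword n Z /\ peq n X (Z ++ A) /\ peq n Y (Z ++ B).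

(* Main.v *)
Require Import Defs.
From mathcomp Require Import all_boot all_order all_algebra.
From mathcomp Require Import zify.
Set Implicit Arguments. Unset Strict Implicit. Unset Printing Implicit Defensive.
Import Order.TTheory GRing.Theory Num.Theory.

Definition cc (t s r q : nat) : bool :=
  [&& t != r, t != q, s != r, s != q & ~~ ((t < r) (+) (t < q) (+) (s < r) (+) (s < q))].

Definition comp (x y : gen) : seq gen :=
  let t := x.1 in let s := x.2 in let r := y.1 in let q := y.2 in
  if (t == r) && (s == q) then [::]
  else if cc t s r q then [:: y]
  else if t == r then (if q < s then [:: (t, q)] else [:: (q, s)])
  else if t == q then [:: (r, t)]
  else if s == r then [:: (t, q)]
  else if s == q then (if r < t then [:: (r, s)] else [:: (r, t)])
  else if [&& q < s, s < r & r < t] then [:: (t, q); (r, s)]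
  else if [&& s < q, q < t & t < r] then [:: (r, t); (q, s)]
  else [::].

Fixpoint rvs (fuel : nat) (U W : seq gen) : option (seq gen * seq gen) :=
  match fuel with 0 => None | fuel'.+1 =>
  match U, W with
  | [::], _ => Some (W, [::])
  | _, [::] => Some ([::], U)
  | u :: us, w :: ws =>
      let x := last u us in let U0 := belast u us in
      let y := last w ws in let W0 := belast w ws in
      match rvs fuel' U0 (comp x y) with
      | None => None
      | Some (A, B) =>
        match rvs fuel' W0 (B ++ comp y x) with
        | None => None
        | Some (C, D) => Some (D ++ A, C)
        end
      end
  end end.

Notation vg := valid_gen.

Definition brel (k : nat) (l r : seq gen) : bool :=
  match l, r with
  | [:: x1; x2], [:: y1; y2] =>
    [|| [&& y1 == x2, y2 == x1, vg k x1, vg k x2 & cc x1.1 x1.2 x2.1 x2.2],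
        [&& x2.1 == x1.2, y1 == (x1.1, x2.2), y2 == x1, x1.1 <= k, x1.2 < x1.1, x2.2 < x1.2 & 0 < x2.2],
        [&& x2.1 == x1.1, y1 == (x2.2, x1.2), y2 == x1, x1.1 <= k, x2.2 < x1.1, x1.2 < x2.2 & 0 < x1.2]
      | [&& x2.1 == x1.2, y1 == x2, y2 == (x1.1, x2.2), x1.1 <= k, x1.2 < x1.1, x2.2 < x1.2 & 0 < x2.2]]
  | _, _ => false
  end.

Definition cands (x y : gen) : seq (seq gen) :=
  [:: [:: y; x]; [:: (x.1, y.2); x]; [:: y; (x.1, y.2)]; [:: y; (y.2, x.2)];
      [:: (y.2, x.2); x]; [:: y; (y.1, x.1)]; [:: (y.1, x.1); x]].

Definition rewrites k x y := [seq c <- cands x y | brel k [:: x; y] c || brel k c [:: x; y]].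

Definition step_words k (u : seq gen) : seq (seq gen) :=
  flatten [seq [seq take i u ++ c ++ drop i.+2 u | c <- rewrites k (nth (0,0) u i) (nth (0,0) u i.+1)]
          | i <- iota 0 (size u).-1].

Fixpoint closure_it k (fuel : nat) (S F : seq (seq gen)) :=
  match fuel with 0 => S | f.+1 =>
    let N := [seq w <- undup (flatten (map (step_words k) F)) | w \notin S] in
    if N is [::] then S else closure_it k f (N ++ S) N end.

Definition closure k w := closure_it k 20 [:: w] [:: w].

Definition cp_check k (a b c : gen) : bool :=
  match rvs 10 (comp c a) (comp c b) with
  | None => false
  | Some (U, W) =>
    let P := U ++ comp a c in let Q := W ++ comp b c in
    let CQ := closure k Q in
    let m := size (comp a b) in
    has (fun w => (drop (size w - m) w == comp a b) && ((take (size w - m) w ++ comp b a) \in CQ)) (closure k P)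
  end.

Definition gens k := [seq g <- [seq (i, j) | i <- iota 0 k.+1, j <- iota 0 k.+1] | vg k g].

Definition check_k k := all (fun a => all (fun b => all (fun c => (size (comp a c) != 1) || cp_check k a b c) (gens k)) (gens k)) (gens k).


Lemma sgz_subn (x y : nat) : sgz (x%:Z - y%:Z) = (if (x < y)%N then -1 else if x == y then 0 else 1)%R.
Proof.
case: ltngtP => h.
- by apply: ltr0_sgz; rewrite subr_lt0 ltz_nat.
- by apply: gtr0_sgz; rewrite subr_gt0 ltz_nat.
- by rewrite h subrr.
Qed.

Lemma commute_ccE t s r q : commute_cond t s r q = cc t s r q.
Proof.
rewrite /commute_cond -sgz_gt0 !sgzM !sgz_subn /cc.
by case: (ltngtP t r); case: (ltngtP t q); case: (ltngtP s r); case: (ltngtP s q).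
Qed.

Lemma pstep_sym n w1 w2 : pstep n w1 w2 -> pstep n w2 w1.
Proof. by case=> u v l r H; [apply: pstep_bwd | apply: pstep_fwd]. Qed.

Lemma peq_trans n w1 w2 w3 : peq n w1 w2 -> peq n w2 w3 -> peq n w1 w3.
Proof. elim=> [//|x y z H _ IH] /IH; exact: peq_step. Qed.

Lemma peq1 n w1 w2 : pstep n w1 w2 -> peq n w1 w2.
Proof. move=> H; apply: peq_step H (peq_refl _ _). Qed.

Lemma peq_sym n w1 w2 : peq n w1 w2 -> peq n w2 w1.
Proof.
elim=> [w|x y z H _ IH]; first exact: peq_refl.
apply: peq_trans IH _; apply: peq1; exact: pstep_sym.
Qed.

Lemma pstep_ctx n p s w1 w2 : pstep n w1 w2 -> pstep n (p ++ w1 ++ s) (p ++ w2 ++ s).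
Proof.
case=> u v l r H.
- have -> : p ++ (u ++ l ++ v) ++ s = (p ++ u) ++ l ++ (v ++ s) by rewrite !catA.
  have -> : p ++ (u ++ r ++ v) ++ s = (p ++ u) ++ r ++ (v ++ s) by rewrite !catA.
  exact: pstep_fwd.
- have -> : p ++ (u ++ r ++ v) ++ s = (p ++ u) ++ r ++ (v ++ s) by rewrite !catA.
  have -> : p ++ (u ++ l ++ v) ++ s = (p ++ u) ++ l ++ (v ++ s) by rewrite !catA.
  exact: pstep_bwd.
Qed.

Lemma peq_ctx n p s w1 w2 : peq n w1 w2 -> peq n (p ++ w1 ++ s) (p ++ w2 ++ s).
Proof.
elim=> [w|x y z H _ IH]; first exact: peq_refl.
apply: peq_step IH; exact: pstep_ctx.
Qed.

Lemma peq_catl n p w1 w2 : peq n w1 w2 -> peq n (p ++ w1) (p ++ w2).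
Proof. by move=> /(peq_ctx p [::]); rewrite !cats0. Qed.

Lemma peq_catr n s w1 w2 : peq n w1 w2 -> peq n (w1 ++ s) (w2 ++ s).
Proof. by move=> /(peq_ctx [::] s). Qed.

Lemma band_rel_size n l r : band_rel n l r -> size l = size r.
Proof. by case. Qed.

Ltac bsplit := repeat (apply/andP; split).

Lemma band_rel_valid n l r : band_rel n l r -> pword n l && pword n r.
Proof.
rewrite /pword /valid_gen; case=> /=.
- move=> t s r' q /andP[/andP[h1 h2] h3] /andP[/andP[h4 h5] h6] _ /=.
  by rewrite h1 h2 h3 h4 h5 h6.
all: move=> t s r' h1 h2 h3 h4; rewrite !andbT; bsplit; lia.
Qed.

Lemma pstep_size n w1 w2 : pstep n w1 w2 -> size w1 = size w2.
Proof. by case=> u v l r /band_rel_size H; rewrite !size_cat H. Qed.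

Lemma peq_size n w1 w2 : peq n w1 w2 -> size w1 = size w2.
Proof. by elim=> // x y z /pstep_size ->. Qed.

Lemma pstep_pword n w1 w2 : pstep n w1 w2 -> pword n w1 = pword n w2.
Proof.
by case=> u v l r /band_rel_valid /andP[H1 H2]; rewrite /pword !all_cat -!/(pword n _) H1 H2.
Qed.

Lemma peq_pword n w1 w2 : peq n w1 w2 -> pword n w1 = pword n w2.
Proof. by elim=> // x y z /pstep_pword ->. Qed.

Lemma pword_cat n u v : pword n (u ++ v) = pword n u && pword n v.
Proof. exact: all_cat. Qed.

Lemma pword_rcons n u x : pword n (rcons u x) = pword n u && valid_gen n x.
Proof. by rewrite -cats1 pword_cat /pword /= andbT. Qed.

Lemma brel_sound k l r : brel k l r -> band_rel k l r.
Proof.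
case: l => [|x1 [|x2 [|? ?]]] //; case: r => [|y1 [|y2 [|? ?]]] //.
case: x1 => t s; case: x2 => t2 s2; case: y1 => t3 s3; case: y2 => t4 s4 /=.
case/or4P.
- case/and5P => /eqP[-> ->] /eqP[-> ->] h1 h2 h3.
  by apply: R1 => //; rewrite commute_ccE.
- case/and5P => /eqP -> /eqP[-> ->] /eqP[-> ->] h1 /and3P[h2 h3 h4].
  exact: R2a.
- case/and5P => /eqP -> /eqP[-> ->] /eqP[-> ->] h1 /and3P[h2 h3 h4].
  exact: R2b.
- case/and5P => /eqP -> /eqP[-> ->] /eqP[-> ->] h1 /and3P[h2 h3 h4].
  exact: R2c.
Qed.

Lemma split_nth (u : seq gen) i : i.+1 < size u ->
  u = take i u ++ [:: nth (0,0) u i; nth (0,0) u i.+1] ++ drop i.+2 u.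
Proof.
move=> H.
rewrite -{1}(cat_take_drop i u); congr (_ ++ _).
rewrite (drop_nth (0,0)) ?(ltn_trans _ H) // (drop_nth (0,0)) //.
Qed.

Lemma step_words_sound k u v : v \in step_words k u -> pstep k u v.
Proof.
case/flattenP=> s /mapP[i Hi ->] /mapP[c Hc ->].
move: Hi; rewrite mem_iota add0n => /andP[_ Hi].
have Hi' : i.+1 < size u by case: (size u) Hi => //= m; rewrite ltnS.
move: Hc; rewrite mem_filter => /andP[/orP[H|H] _].
- rewrite {1}(split_nth Hi'); apply: pstep_fwd; exact: brel_sound.
- rewrite {1}(split_nth Hi'); apply: pstep_bwd; exact: brel_sound.
Qed.

Lemma closure_it_sound k w0 fuel S F :
  (forall w, w \in S -> peq k w0 w) -> (forall w, w \in F -> peq k w0 w) ->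
  forall w, w \in closure_it k fuel S F -> peq k w0 w.
Proof.
elim: fuel S F => [|f IH] S F HS HF //=.
set N := [seq _ <- _ | _].
have HN : forall w, w \in N -> peq k w0 w.
  move=> w; rewrite mem_filter mem_undup => /andP[_ /flattenP[s /mapP[u Hu ->]] Hw].
  apply: peq_trans (HF u Hu) (peq1 _); exact: step_words_sound.
case: N HN => [|x N'] HN //.
apply: IH => // w; rewrite mem_cat => /orP[]; [exact: HN | exact: HS].
Qed.

Lemma closure_sound k w0 w : w \in closure k w0 -> peq k w0 w.
Proof.
apply: closure_it_sound => w'; rewrite inE => /eqP ->; exact: peq_refl.
Qed.

Lemma cp_check_sound k a b c : cp_check k a b c ->
  exists U W Z, rvs 10 (comp c a) (comp c b) = Some (U, W) /\
    peq k (U ++ comp a c) (Z ++ comp a b) /\ peq k (W ++ comp b c) (Z ++ comp b a).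
Proof.
rewrite /cp_check; case: rvs => [[U W]|] //.
set m := size (comp a b).
case/hasP => w Hw /andP[/eqP Hd Ht].
exists U, W, (take (size w - m) w); split => //; split.
- by rewrite -Hd cat_take_drop; exact: closure_sound.
- exact: closure_sound.
Qed.

Lemma check_all : all check_k (iota 0 7).
Proof. by vm_compute. Qed.

Lemma gens_mem k g : valid_gen k g -> g \in gens k.
Proof.
case: g => i j H; rewrite /gens mem_filter H andTb.
case/andP: H => /andP[h1 h2] h3; rewrite /= in h1 h2 h3.
apply: (allpairs_f (fun x y => (x, y))); rewrite mem_iota add0n; lia.
Qed.

Lemma cp_all k a b c : k <= 6 -> valid_gen k a -> valid_gen k b -> valid_gen k c ->
  size (comp a c) = 1 -> cp_check k a b c.
Proof.
move=> hk ha hb hc hs.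
have /allP /(_ k) : all check_k (iota 0 7) by exact: check_all.
rewrite mem_iota /= ltnS hk => /(_ isT) /allP /(_ a (gens_mem ha)) /allP /(_ b (gens_mem hb))
  /allP /(_ c (gens_mem hc)).
by rewrite hs.
Qed.

Definition fL (L : seq nat) (i : nat) : nat :=
  if i == 0 then 0 else if i <= size L then nth 0 L i.-1 else last 0 L + (i - size L).

Lemma fL_step L : sorted ltn L -> all (fun x => 0 < x) L -> forall i, fL L i < fL L i.+1.
Proof.
move=> Hs Hp i; rewrite /fL /=.
case: i => [|i] /=.
- by case: L Hs Hp => [|x L] //= _ /andP[].
have [h|h] := ssrnat.leqP i.+2 (size L).
- have := sorted_ltn_nth ltn_trans 0 Hs; move=> /(_ i i.+1); rewrite !inE (ltnW h); apply => //; lia.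
have [h2|h2] := ssrnat.leqP i.+1 (size L).
- have e : size L = i.+1 by lia.
  rewrite -nth_last e /=; lia.
- lia.
Qed.

Lemma abstraction n (S : seq nat) : all (fun x => 0 < x <= n) S ->
  exists k (f g : nat -> nat), [/\ k <= size S, f k <= n,
    {mono f : x y / x < y}, {mono f : x y / x == y} &
    forall x, x \in S -> f (g x) = x /\ 0 < g x <= k].
Proof.
move=> HS.
set L := sort leq (undup S).
have HL : forall x, (x \in L) = (x \in S) by move=> x; rewrite mem_sort mem_undup.
have Hs : sorted ltn L.
  by rewrite ltn_sorted_uniq_leq sort_uniq undup_uniq sort_sorted //; exact: leq_total.
have Hp : all (fun x => 0 < x) L.
  by apply/allP => x; rewrite HL => /(allP HS) /andP[].
have Hle : {mono fL L : x y / x <= y} by apply: leq_mono; apply: homo_ltn ltn_trans (fL_step Hs Hp).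
exists (size L), (fL L), (fun x => (index x L).+1); split.
- by rewrite size_sort (leq_trans (size_undup _)).
- rewrite /fL; case: (posnP (size L)) => [|hpos] //.
  rewrite leqnn.
  have : nth 0 L (size L).-1 \in L by apply: mem_nth; rewrite ltn_predL.
  by rewrite HL => /(allP HS) /andP[_ ->].
- by move=> x y; rewrite !ltnNge Hle.
- by move=> x y; rewrite !eqn_leq !Hle.
- move=> x Hx; rewrite /fL /= index_mem HL Hx /=; split => //.
  by rewrite nth_index // HL.
Qed.

Section Transport.
Variables (f : nat -> nat).
Hypothesis Hlt : {mono f : x y / x < y}.
Hypothesis Heq : {mono f : x y / x == y}.

Definition F (g : gen) : gen := (f g.1, f g.2).

Lemma Hle : {mono f : x y / x <= y}.
Proof. by move=> x y; rewrite leqNgt Hlt -leqNgt. Qed.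

Lemma cc_mono t s r q : cc (f t) (f s) (f r) (f q) = cc t s r q.
Proof. by rewrite /cc !Heq !Hlt. Qed.

Lemma comp_mono x y : comp (F x) (F y) = map F (comp x y).
Proof.
case: x => t s; case: y => r q; rewrite /comp /= cc_mono !Heq !Hlt.
by repeat case: ifP.
Qed.

Lemma rvs_mono fuel U W :
  rvs fuel (map F U) (map F W) = omap (fun p => (map F p.1, map F p.2)) (rvs fuel U W).
Proof.
elim: fuel U W => [//|fu IH] [|u us] [|w ws] //=.
rewrite !last_map !belast_map comp_mono IH.
case: (rvs fu (belast u us) (comp (last u us) (last w ws))) => [[A B]|] //=.
rewrite comp_mono -map_cat IH.
case: (rvs fu (belast w ws) (B ++ comp (last w ws) (last u us))) => [[C D]|] //=.
by rewrite map_cat.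
Qed.

Variables (k n : nat).
Hypothesis Hkn : f k <= n.

Lemma f_pos x : 0 < x -> 0 < f x.
Proof. by move=> h; rewrite (leq_ltn_trans _ (_ : f 0 < f x)) // Hlt. Qed.

Lemma valid_mono g : valid_gen k g -> valid_gen n (F g).
Proof.
case: g => t s; rewrite /valid_gen /= => /andP[/andP[h1 h2] h3].
by rewrite f_pos // Hlt h2 (leq_trans _ Hkn) // Hle.
Qed.

Lemma f_le t : t <= k -> f t <= n.
Proof. by move=> h; apply: leq_trans Hkn; rewrite Hle. Qed.

Lemma band_rel_mono l r : band_rel k l r -> band_rel n (map F l) (map F r).
Proof.
case.
- move=> t s r' q h1 h2 h3 /=; apply: R1.
  + exact: (valid_mono h1).
  + exact: (valid_mono h2).
  + by rewrite commute_ccE cc_mono -commute_ccE.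
- move=> t s r' h1 h2 h3 h4 /=; apply: R2a; rewrite ?Hlt ?f_pos ?f_le //.
- move=> t s r' h1 h2 h3 h4 /=; apply: R2b; rewrite ?Hlt ?f_pos ?f_le //.
- move=> t s r' h1 h2 h3 h4 /=; apply: R2c; rewrite ?Hlt ?f_pos ?f_le //.
Qed.

Lemma pstep_mono w1 w2 : pstep k w1 w2 -> pstep n (map F w1) (map F w2).
Proof.
case=> u v l r H; rewrite !map_cat.
- apply: pstep_fwd; exact: band_rel_mono.
- apply: pstep_bwd; exact: band_rel_mono.
Qed.

Lemma peq_mono w1 w2 : peq k w1 w2 -> peq n (map F w1) (map F w2).
Proof.
elim=> [w|x y z H _ IH]; first exact: peq_refl.
apply: peq_step IH; exact: pstep_mono.
Qed.

End Transport.

Lemma cp n a b c : valid_gen n a -> valid_gen n b -> valid_gen n c -> size (comp a c) = 1 ->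
  exists U W Z, rvs 10 (comp c a) (comp c b) = Some (U, W) /\
    peq n (U ++ comp a c) (Z ++ comp a b) /\ peq n (W ++ comp b c) (Z ++ comp b a).
Proof.
move=> Ha Hb Hc Hs.
have HS : all (fun x => 0 < x <= n) [:: a.1; a.2; b.1; b.2; c.1; c.2].
  move: Ha Hb Hc; rewrite /valid_gen /= => /andP[/andP[? ?] ?] /andP[/andP[? ?] ?] /andP[/andP[? ?] ?].
  rewrite !andbT; bsplit; lia.
have [k [f [g [Hk Hkn Hlt Heq Hg]]]] := abstraction HS.
have Hk6 : k <= 6 by move: Hk.
pose G (x : gen) : gen := (g x.1, g x.2).
have EF : forall x, x \in [:: a; b; c] -> F f (G x) = x /\ valid_gen k (G x).
  move=> x Hx.
  have [h1 h2] : x.1 \in [:: a.1; a.2; b.1; b.2; c.1; c.2] /\ x.2 \in [:: a.1; a.2; b.1; b.2; c.1; c.2].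
    by move: Hx; rewrite !inE => /or3P[] /eqP ->; rewrite !eqxx ?orbT.
  have Hx' : valid_gen n x by move: Hx; rewrite !inE => /or3P[] /eqP ->.
  have [e1 /andP[p1 q1]] := Hg _ h1; have [e2 /andP[p2 q2]] := Hg _ h2.
  split; first by rewrite /F /G /= e1 e2; case: x {Hx Hx' h1 h2 e1 e2 p1 q1 p2 q2}.
  move: Hx'; rewrite /valid_gen /G /= => /andP[/andP[_ hlt] _].
  by rewrite p2 q1 -Hlt e1 e2 hlt.
have [Ea Va] := EF a (mem_head _ _).
have hb : b \in [:: a; b; c] by rewrite !inE eqxx orbT.
have hc : c \in [:: a; b; c] by rewrite !inE eqxx !orbT.
have [Eb Vb] := EF b hb.
have [Ec Vc] := EF c hc.
rewrite -Ea -Eb -Ec in Hs *.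
rewrite (comp_mono Hlt Heq) size_map in Hs.
have [U [W [Z [H1 [H2 H3]]]]] := cp_check_sound (cp_all Hk6 Va Vb Vc Hs).
exists (map (F f) U), (map (F f) W), (map (F f) Z).
rewrite !(comp_mono Hlt Heq) (rvs_mono Hlt Heq) H1; split => //.
rewrite -!map_cat; split; exact: (peq_mono Hlt Heq Hkn).
Qed.

Lemma cc_sym t s r q : cc r q t s = cc t s r q.
Proof.
rewrite /cc.
by case: (ltngtP t r); case: (ltngtP t q); case: (ltngtP s r); case: (ltngtP s q).
Qed.

Ltac compsolve := rewrite /comp /cc /=; repeat (case: ifP => /=); try done; intros; lia.

Lemma rel_comp n l r : band_rel n l r -> exists x1 x2 y1 y2,
  [/\ l = [:: x1; x2], r = [:: y1; y2], comp x2 y2 = [:: x1], comp y2 x2 = [:: y1]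
      & valid_gen n x2 && valid_gen n y2].
Proof.
case.
- move=> t s r' q h1 h2; rewrite commute_ccE => h3.
  exists (t, s), (r', q), (r', q), (t, s); split => //.
  + rewrite /comp /= cc_sym h3; case: ifP => // /andP[/eqP e1 /eqP e2].
    by move: h3; rewrite /cc e1 eqxx.
  + rewrite /comp /= h3; case: ifP => // /andP[/eqP e1 /eqP e2].
    by move: h3; rewrite /cc e1 eqxx.
  + by apply/andP; split.
- move=> t s r' h1 h2 h3 h4.
  exists (t, s), (s, r'), (t, r'), (t, s); split => //; try compsolve.
  rewrite /valid_gen /=; bsplit; lia.
- move=> t s r' h1 h2 h3 h4.
  exists (t, r'), (t, s), (s, r'), (t, r'); split => //; try compsolve.
  rewrite /valid_gen /=; bsplit; lia.
- move=> t s r' h1 h2 h3 h4.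
  exists (t, s), (s, r'), (s, r'), (t, r'); split => //; try compsolve.
  rewrite /valid_gen /=; bsplit; lia.
Qed.

Definition step_concl n X a W :=
  exists V c, W = rcons V c /\ ((c = a /\ pstep n X V) \/
    (exists U x y, [/\ X = rcons U x, V = rcons U y, comp a c = [:: x], comp c a = [:: y]
                    & valid_gen n a && valid_gen n c])).

Lemma step_last_aux n X a u v l r :
  (exists x1 x2 y1 y2, [/\ l = [:: x1; x2], r = [:: y1; y2], comp x2 y2 = [:: x1],
      comp y2 x2 = [:: y1] & valid_gen n x2 && valid_gen n y2]) ->
  (forall u v, pstep n (u ++ l ++ v) (u ++ r ++ v)) ->
  rcons X a = u ++ l ++ v -> step_concl n X a (u ++ r ++ v).
Proof.
move=> [x1 [x2 [y1 [y2 [-> -> C1 C2 V]]]]] Hs.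
case: (lastP v) => [|v' z] E.
- exists (rcons u y1), y2; split; first by rewrite cats0 -!cats1 -catA.
  move: E; rewrite cats0 (_ : u ++ [:: x1; x2] = rcons (rcons u x1) x2); last by rewrite -!cats1 -catA.
  move=> /eqP; rewrite eqseq_rcons => /andP[/eqP EX /eqP Ea].
  by right; exists u, x1, y1; rewrite Ea; split.
- exists (u ++ [:: y1; y2] ++ v'), z; split; first by rewrite !rcons_cat.
  move: E; rewrite -!rcons_cat => /eqP; rewrite eqseq_rcons => /andP[/eqP EX /eqP Ea].
  by left; split => //; rewrite EX; exact: Hs.
Qed.

Lemma step_last n X a W : pstep n (rcons X a) W -> step_concl n X a W.
Proof.
move Ew: (rcons X a) => w H; case: H Ew => u v l r Hr Ew.
- apply: step_last_aux Ew; first exact: rel_comp.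
  by move=> u' v'; apply: pstep_fwd.
- apply: step_last_aux Ew; last by move=> u' v'; apply: pstep_bwd.
  have [x1 [x2 [y1 [y2 [-> -> C1 C2 V]]]]] := rel_comp Hr.
  by exists y1, y2, x1, x2; split => //; rewrite andbC.
Qed.

Definition ML n N := forall X Y a b, size X < N -> pword n (rcons X a) ->
  peq n (rcons X a) (rcons Y b) ->
  exists Z, peq n X (Z ++ comp a b) /\ peq n Y (Z ++ comp b a).

Lemma rev_ok n N : ML n N -> forall fuel U W Z1 Z2 U' W',
  size (Z1 ++ U) <= N -> pword n (Z1 ++ U) -> peq n (Z1 ++ U) (Z2 ++ W) ->
  rvs fuel U W = Some (U', W') ->
  exists Z3, peq n Z1 (Z3 ++ U') /\ peq n Z2 (Z3 ++ W').
Proof.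
move=> HML; elim=> [//|fu IH] [|u us] [|w ws] Z1 Z2 U' W' Hsz Hpw Hpq //=.
- case=> <- <-; exists Z2; rewrite cats0 in Hpq; split => //; rewrite cats0; exact: peq_refl.
- case=> <- <-; exists Z2; rewrite cats0 in Hpq; split => //; rewrite cats0; exact: peq_refl.
- case=> <- <-; exists Z1; rewrite cats0 in Hpq; split; first by rewrite cats0; exact: peq_refl.
  exact: peq_sym.
set x := last u us; set U0 := belast u us; set y := last w ws; set W0 := belast w ws.
have EU : Z1 ++ u :: us = rcons (Z1 ++ U0) x by rewrite rcons_cat /U0 /x -lastI.
have EW : Z2 ++ w :: ws = rcons (Z2 ++ W0) y by rewrite rcons_cat /W0 /y -lastI.
rewrite EU EW in Hpq; rewrite EU in Hsz Hpw.
rewrite size_rcons in Hsz.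
have [Z4 [H1 H2]] := HML _ _ _ _ Hsz Hpw Hpq.
have Hpw0 : pword n (Z1 ++ U0) by move: Hpw; rewrite pword_rcons => /andP[].
have Hpw1 : pword n (rcons (Z2 ++ W0) y) by rewrite -(peq_pword Hpq).
have Hpw2 : pword n (Z2 ++ W0) by move: Hpw1; rewrite pword_rcons => /andP[].
have Hsz2 : size (Z2 ++ W0) = size (Z1 ++ U0).
  by have := peq_size Hpq; rewrite !size_rcons => -[].
case E1: (rvs fu U0 (comp x y)) => [[A B]|] //.
have [Z5 [H3 H4]] := IH _ _ _ _ _ _ (ltnW Hsz) Hpw0 H1 E1.
case E2: (rvs fu W0 (B ++ comp y x)) => [[C D]|] //.
have H5 : peq n (Z2 ++ W0) (Z5 ++ B ++ comp y x).
  apply: peq_trans H2 _; rewrite catA; exact: peq_catr.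
have Hsz3 : size (Z2 ++ W0) <= N by rewrite Hsz2 ltnW.
have [Z6 [H6 H7]] := IH _ _ _ _ _ _ Hsz3 Hpw2 H5 E2.
case=> <- <-; exists Z6; split => //.
apply: peq_trans H3 _; rewrite catA; exact: peq_catr.
Qed.

Lemma comp_refl x : comp x x = [::].
Proof. by rewrite /comp !eqxx. Qed.

Lemma ML_all n N : ML n N.
Proof.
elim: N => [|N IHN] X Y a b //.
move=> HX Hp Hpq.
suff : forall w1 w3, peq n w1 w3 -> forall X a, w1 = rcons X a -> w3 = rcons Y b ->
  size X < N.+1 -> pword n (rcons X a) ->
  exists Z, peq n X (Z ++ comp a b) /\ peq n Y (Z ++ comp b a).
  by move=> /(_ _ _ Hpq X a erefl erefl HX Hp).
move=> w1 w3; elim=> [w|w1' w2 w3' Hs Hq IH] X' a' E1 E3 HX' Hp'.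
- rewrite E1 in E3; move/eqP: E3; rewrite eqseq_rcons => /andP[/eqP -> /eqP ->].
  exists Y; rewrite comp_refl cats0; split; exact: peq_refl.
rewrite E1 in Hs.
have [V [c [E2 Hcase]]] := step_last Hs.
have HszV : size V = size X' by have := pstep_size Hs; rewrite E2 !size_rcons => -[].
have HpV : pword n (rcons V c) by rewrite -E2 -(pstep_pword Hs).
have HszV' : size V < N.+1 by rewrite HszV.
have [Z2 [H1 H2]] := IH V c E2 E3 HszV' HpV.
have HpY : pword n (rcons Y b) by rewrite -E3 -(peq_pword Hq) E2.
case: Hcase => [[Ec Hst]|[U [x [y [EX EV Cac Cca Vac]]]]].
- subst c; exists Z2; split => //; exact: peq_step Hst H1.
move/andP: Vac => [Va Vc].
have Vb : valid_gen n b by move: HpY; rewrite pword_rcons => /andP[].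
have Hs1 : size (comp a' c) = 1 by rewrite Cac.
have [U' [W' [Z' [Hr [H3 H4]]]]] := cp Va Vb Vc Hs1.
have HML := IHN.
have Hsz : size (U ++ comp c a') <= N by rewrite Cca cats1 -EV HszV -ltnS.
have Hpw : pword n (U ++ comp c a') by rewrite Cca cats1 -EV; move: HpV; rewrite pword_rcons => /andP[].
have Hpq' : peq n (U ++ comp c a') (Z2 ++ comp c b) by rewrite Cca cats1 -EV.
have [Z3 [H5 H6]] := rev_ok HML Hsz Hpw Hpq' Hr.
exists (Z3 ++ Z'); split.
- rewrite EX -cats1 -Cac -catA; apply: peq_trans (peq_catr _ H5) _.
  rewrite -!catA; exact: peq_catl.
- apply: peq_trans H2 _; apply: peq_trans (peq_catr _ H6) _.
  rewrite -!catA; exact: peq_catl.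
Qed.

Lemma cp_intro n X Y A B Z : pword n X -> peq n X (Z ++ A) -> peq n Y (Z ++ B) ->
  common_prefix n X Y A B.
Proof.
move=> Hp H1 H2; exists Z; split => //.
by move: Hp; rewrite (peq_pword H1) pword_cat => /andP[].
Qed.

Theorem theorem2p4 (n : nat) (X Y : seq gen) (t s r q : nat) :
  pword n X -> pword n Y ->
  1 <= s -> s < t -> t <= n ->
  1 <= q -> q < r -> r <= n ->
  peq n (rcons X (a t s)) (rcons Y (a r q)) ->
  (* (I) *)
  ((t = r /\ s = q) -> peq n X Y) /\
  (* (II) *)
  ((t = r /\ q < s) -> common_prefix n X Y [:: a t q] [:: a s q]) /\
  ((t = r /\ s < q) -> common_prefix n X Y [:: a q s] [:: a t s]) /\
  (t = q -> common_prefix n X Y [:: a r t] [:: a r s]) /\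
  (s = r -> common_prefix n X Y [:: a t q] [:: a t s]) /\
  ((s = q /\ r < t) -> common_prefix n X Y [:: a r s] [:: a t r]) /\
  ((s = q /\ t < r) -> common_prefix n X Y [:: a r t] [:: a t s]) /\
  (* (III) *)
  (commute_cond t s r q -> common_prefix n X Y [:: a r q] [:: a t s]) /\
  (* (IV) *)
  ((q < s /\ s < r /\ r < t) ->
     common_prefix n X Y [:: a t q; a r s] [:: a t r; a s q]) /\
  ((s < q /\ q < t /\ t < r) ->
     common_prefix n X Y [:: a r t; a q s] [:: a t q; a r s]).
Proof.
move=> HX HY hs1 hst htn hq1 hqr hrn Hpq.
have Hp : pword n (rcons X (a t s)) by rewrite pword_rcons HX /valid_gen /=; bsplit; lia.
have Hsz : size X < (size X).+1 by [].
have [Z [H1 H2]] := ML_all Hsz Hp Hpq.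
have C : forall A B, comp (t, s) (r, q) = A -> comp (r, q) (t, s) = B -> common_prefix n X Y A B.
  move=> A B eA eB; apply: (cp_intro HX); [rewrite -eA; exact: H1 | rewrite -eB; exact: H2].
rewrite /a.
split.
  case=> e1 e2; subst r q; rewrite /a comp_refl cats0 in H1 H2.
  exact: peq_trans H1 (peq_sym H2).
split.
  case=> e h; subst r; apply: C; compsolve.
split.
  case=> e h; subst r; apply: C; compsolve.
split.
  move=> e; subst q; apply: C; compsolve.
split.
  move=> e; subst r; apply: C; compsolve.
split.
  case=> e h; subst q; apply: C; compsolve.
split.
  case=> e h; subst q; apply: C; compsolve.
split.
  rewrite commute_ccE => h; apply: C.
  - rewrite /comp /= h; case: ifP => // /andP[/eqP e1 _]; by move: h; rewrite /cc e1 eqxx.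
  - rewrite /comp /= cc_sym h; case: ifP => // /andP[/eqP e1 _]; by move: h; rewrite /cc e1 eqxx.
split.
  case=> h1 [h2 h3]; apply: C; compsolve.
case=> h1 [h2 h3].
have E1 : comp (t, s) (r, q) = [:: (r, t); (q, s)] by compsolve.
have E2 : comp (r, q) (t, s) = [:: (r, s); (t, q)] by compsolve.
exists Z; split.
  by move: HX; rewrite (peq_pword H1) pword_cat => /andP[].
rewrite E1 E2 in H1 H2; split => //.
apply: peq_trans H2 (peq1 _).
rewrite -(cats0 (Z ++ _)) -(cats0 (Z ++ [:: (t,q); _])) -!catA.
apply: pstep_fwd; apply: R1; rewrite ?commute_ccE /cc /valid_gen /=.
all: lia.
Qed.
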